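(* Let $\mathbf{X}=(X_1,\dots,X_d)$ be a random vector such that each $X_i$ is a.s. nonnegative with $0<E(X_i)<\infty$, and let $\|\mathbf{x}\|_F=E(\max(|x_0|,|x_1|X_1,\dots,|x_d|X_d))$. For any $\mathbf{x}\in\mathbb{R}^{d+1}$, $$\max(|x_0|,|x_1|E(X_1),\dots,|x_d|E(X_d))\le\|\mathbf{x}\|_F\le|x_0|+\sum_{i=1}^d|x_i|E(X_i).$$ The upper bound is strict whenever $x_0\ne0$ and $x_i\ne0$ for at least one $i\in\{1,\dots,d\}$. *)

(* Defs.v *)
From HB Require Import structures.
From mathcomp Require Import all_boot all_order all_algebra.
From mathcomp Require Import all_classical all_reals all_analysis.
Set Implicit Arguments. Unset Strict Implicit. Unset Printing Implicit Defensive.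
Import Order.TTheory GRing.Theory Num.Theory.
Local Open Scope ring_scope.

(* x : 'rV_(d.+1) encodes (x_0, x_1, ..., x_d): x_0 = x 0 ord0,
   x_i = x 0 (lift ord0 (i-1)); X i encodes X_{i+1}. *)
Definition normF (d : nat) (dT : measure_display) (T : measurableType dT)
  (R : realType) (P : probability T R) (X : 'I_d -> {RV P >-> R})
  (x : 'rV[R]_d.+1) : \bar R :=
  ('E_P[fun w : T => (\big[Num.max/`|x 0 ord0|]_(i < d) (`|x 0 (lift ord0 i)| * X i w))%R])%E.

(* Main.v *)
Require Import Defs.
From HB Require Import structures.
From mathcomp Require Import all_boot all_order all_algebra.
From mathcomp Require Import all_classical all_reals all_analysis.
From mathcomp Require Import measurable_realfun.
From mathcomp Require Import lra.
Import Order.TTheory GRing.Theory Num.Theory.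
Local Open Scope ring_scope.

Lemma mbigmax (dT : measure_display) (T : measurableType dT) (R : realType)
  (I : Type) (s : seq I) (a : R) (F : I -> T -> R) :
  (forall i, measurable_fun setT (F i)) ->
  measurable_fun setT (fun w => \big[Num.max/a]_(i <- s) F i w).
Proof.
move=> mF; elim: s => [|i s IH].
  under eq_fun do rewrite big_nil. exact: measurable_cst.
under eq_fun do rewrite big_cons.
exact: measurable_maxr (mF i) IH.
Qed.

Lemma msum (dT : measure_display) (T : measurableType dT) (R : realType)
  (I : Type) (s : seq I) (F : I -> T -> R) :
  (forall i, measurable_fun setT (F i)) ->
  measurable_fun setT (fun w => \sum_(i <- s) F i w).
Proof.
move=> mF; elim: s => [|i s IH].
  under eq_fun do rewrite big_nil. exact: measurable_cst.
under eq_fun do rewrite big_cons.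
exact: measurable_funD (mF i) IH.
Qed.

Theorem proposition2p17 (d : nat) (dT : measure_display) (T : measurableType dT)
  (R : realType) (P : probability T R) (X : 'I_d -> {RV P >-> R})
  (hX0 : forall i, {ae P, forall w, 0 <= X i w})
  (hXpos : forall i, (0 < 'E_P[X i])%E)
  (hXfin : forall i, ('E_P[X i] < +oo)%E)
  (x : 'rV[R]_d.+1) :
  ((forall i : 'I_d, `|x 0 (lift ord0 i)|%:E * 'E_P[X i] <= normF X x)%E
   /\ (`|x 0 ord0|%:E <= normF X x)%E)
  /\ (normF X x <= `|x 0 ord0|%:E
        + \sum_(i < d) `|x 0 (lift ord0 i)|%:E * 'E_P[X i])%E
  /\ (x 0 ord0 != 0 -> (exists i : 'I_d, x 0 (lift ord0 i) != 0) ->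
      (normF X x < `|x 0 ord0|%:E
        + \sum_(i < d) `|x 0 (lift ord0 i)|%:E * 'E_P[X i])%E).
Proof.
set a := `|x 0 ord0|.
pose c := fun i : 'I_d => `|x 0 (lift ord0 i)|.
pose Xp i w := Num.max (X i w) 0.
pose Y i w := c i * Xp i w.
pose M w := \big[Num.max/a]_(i < d) (c i * X i w).
pose S w := a + \sum_(i < d) Y i w.
have a0 : 0 <= a by exact: normr_ge0.
have c0 i : 0 <= c i by exact: normr_ge0.
have Xp0 i w : 0 <= Xp i w by rewrite /Xp le_max lexx orbT.
have Y0 i w : 0 <= Y i w by rewrite /Y mulr_ge0.
have mX i : measurable_fun setT (X i) by [].
have mXp i : measurable_fun setT (Xp i).
  exact: measurable_maxr (mX i) (measurable_cst _).
have mY i : measurable_fun setT (Y i).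
  exact: measurable_funM (measurable_cst _) (mXp i).
have mM : measurable_fun setT M.
  apply: mbigmax => i; exact: measurable_funM (measurable_cst _) (mX i).
have mS : measurable_fun setT S.
  have -> : S = (cst a) \+ (fun w => \sum_(i < d) Y i w) by [].
  apply: measurable_funD; first exact: measurable_cst.
  exact: msum.
have EM : normF X x = (\int[P]_w (M w)%:E)%E by rewrite /normF unlock.
have aM w : a <= M w by exact: bigmax_ge_id.
have YM i w : Y i w <= M w.
  rewrite /Y /Xp maxr_pMr // mulr0 ge_max (le_trans a0 (aM w)) andbT.
  exact: (le_bigmax a (fun i => c i * X i w) i).
have MS w : M w <= S w.
  apply: bigmax_le => [|i _]; first by rewrite /S lerDl sumr_ge0.
  apply: (le_trans (y := Y i w)).
    by rewrite /Y ler_wpM2l // /Xp le_max lexx.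
  rewrite /S (bigD1 i) //= addrCA lerDl addr_ge0 // sumr_ge0 //.
have EXp i : ('E_P[X i] = \int[P]_w (Xp i w)%:E)%E.
  rewrite unlock; apply: ae_eq_integral => //.
  - exact/measurable_EFinP.
  - exact/measurable_EFinP.
  - apply: filterS (hX0 i) => w Xw _; congr EFin; rewrite /Xp.
    by apply/esym/max_idPl.
have EY i : (\int[P]_w (Y i w)%:E = (c i)%:E * 'E_P[X i])%E.
  rewrite EXp -ge0_integralZl_EFin //.
  - by move=> w _; rewrite lee_fin.
  - exact/measurable_EFinP.
have ES : (\int[P]_w (S w)%:E = a%:E + \sum_(i < d) (c i)%:E * 'E_P[X i])%E.
  under eq_integral do rewrite /S EFinD -sumEFin.
  rewrite ge0_integralD //.
  - have -> : (\int[P]_w a%:E = a%:E)%E.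
      by have := expectation_cst P a; rewrite unlock.
    congr (_ + _)%E.
    rewrite ge0_integral_sum //.
    + by apply: eq_bigr => i _; rewrite EY.
    + by move=> i; exact/measurable_EFinP.
    + by move=> i w _; rewrite lee_fin.
  - by move=> w _; apply: sume_ge0 => i _; rewrite lee_fin.
  - apply: emeasurable_sum => i; exact/measurable_EFinP.
have M0 w : 0 <= M w by apply: le_trans a0 (aM w).
have YS k w : Y k w <= \sum_(i < d) Y i w.
  by rewrite (bigD1 k) //= lerDl sumr_ge0.
have ESfin : (a%:E + \sum_(i < d) (c i)%:E * 'E_P[X i])%E \is a fin_num.
  rewrite fin_numD /= sum_fin_num; apply/allP => z /mapP [i _ ->] /=.
  apply: fin_numM => //; rewrite ge0_fin_numE ?hXfin //; exact: ltW.
have IMS : (\int[P]_w (M w)%:E <= \int[P]_w (S w)%:E)%E.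
  { apply: ge0_le_integral => //.
  all: try (by move=> w _; rewrite lee_fin).
  all: try exact/measurable_EFinP. }
rewrite EM; split; [split|split].
- move=> i; rewrite -EY; apply: ge0_le_integral => //.
  all: try (by move=> w _; rewrite lee_fin).
  all: try exact/measurable_EFinP.
- have <- : (\int[P]_w a%:E = a%:E)%E.
    by have := expectation_cst P a; rewrite unlock.
  apply: ge0_le_integral => //.
  all: try (by move=> w _; rewrite lee_fin).
  all: try exact/measurable_EFinP.
- by rewrite -ES.
move=> x00 [j xj].
pose h w := Num.min a (Y j w).
have mh : measurable_fun setT h.
  have -> : h = (cst a) \min (Y j) by [].
  exact: measurable_minr (measurable_cst _) (mY j).
have h0 w : 0 <= h w by rewrite /h le_min a0 Y0.
have hMS w : h w + M w <= S w.
  have ha : h w <= a by rewrite /h ge_min lexx.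
  have hY : h w <= Y j w by rewrite /h ge_min lexx orbT.
  suff HM : M w <= S w - h w by lra.
  apply: bigmax_le => [|i _].
    have := YS j w; rewrite /S; lra.
  apply: (le_trans (y := Y i w)).
    by rewrite /Y ler_wpM2l // /Xp le_max lexx.
  have := YS i w; rewrite /S; lra.
have Ih0 : (0 < \int[P]_w (h w)%:E)%E.
  rewrite lt0e integral_ge0 ?andbT; last by move=> w _; rewrite lee_fin.
  apply/negP => /eqP Ih.
  have : ae_eq P setT (fun w => (h w)%:E) (cst 0%E).
    apply/(ae_eq_integral_abs P measurableT); first exact/measurable_EFinP.
    rewrite -Ih; apply: eq_integral => w _; rewrite gee0_abs // lee_fin; exact: h0.
  move=> hae.
  have : ('E_P[X j] = 0)%E.
    rewrite EXp (ae_eq_integral (cst 0%E)) //; first exact: integral0.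
    - exact/measurable_EFinP.
    - apply: filterS hae => w hw _; move: (hw I) => /= [] hw0.
      congr EFin; apply/eqP; rewrite eq_le Xp0 andbT leNgt; apply/negP => Xpos.
      have : 0 < h w.
        rewrite /h lt_min; apply/andP; split.
          by rewrite /a normr_gt0.
        by rewrite /Y mulr_gt0 // /c normr_gt0.
      by rewrite hw0 ltxx.
  by move=> E0; move: (hXpos j); rewrite E0 ltxx.
have IhM : (\int[P]_w (h w)%:E + \int[P]_w (M w)%:E <= \int[P]_w (S w)%:E)%E.
  { rewrite -ge0_integralD //.
  - apply: ge0_le_integral => //.
    all: try (by move=> w _; rewrite adde_ge0 // lee_fin).
    all: try (by move=> w _; rewrite -EFinD lee_fin).
    all: try exact/measurable_EFinP.
    have -> : (fun w => ((h w)%:E + (M w)%:E)%E) = EFin \o (h \+ M).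
      by apply/funext => w; rewrite /= EFinD.
    by apply/measurable_EFinP; exact: measurable_funD.
  all: try (by move=> w _; rewrite lee_fin).
  all: try exact/measurable_EFinP. }
have IMfin : (\int[P]_w (M w)%:E)%E \is a fin_num.
  rewrite ge0_fin_numE; last by apply: integral_ge0 => w _; rewrite lee_fin.
  apply: (le_lt_trans IMS); rewrite ES -ge0_fin_numE //.
  by rewrite -ES; apply: (le_trans _ IMS); apply: integral_ge0 => w _; rewrite lee_fin.
rewrite -ES; apply: lt_le_trans IhM; rewrite lteDr //.
Qed.
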